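(* Let $\rho>1$ and let $\mathbf{p}=(p_1,\ldots,p_n)$ be a probability distribution with $p_1\geq\cdots\geq p_n>0$ and $p_1/p_n\leq\rho$. Then $$\log_2 n-H(\mathbf{z}_\rho(\mathbf{p}))\leq\left(\frac{\rho\ln\rho}{\rho-1}-1-\ln\frac{\rho\ln\rho}{\rho-1}\right)\frac{1}{\ln 2}.$$
   Context: $H$ is Shannon entropy in bits and $\ln$ is the natural logarithm. Let $i=\left\lfloor\frac{1-np_n}{p_n(\rho-1)}\right\rfloor$. Define $\mathbf{z}_\rho(\mathbf{p})$ as the length-$n$ vector whose first $i$ entries equal $\rho p_n$, whose next entry equals $1-(n+i\rho-i-1)p_n$, and whose remaining $n-i-1$ entries equal $p_n$. *)

(* Defs.v *)
From Stdlib Require Export Reals Lra Lia ZArith List.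
Export ListNotations.
Open Scope R_scope.

Definition rsum (n : nat) (f : nat -> R) : R :=
  fold_right Rplus 0 (map f (seq 0 n)).

Definition log2 (x : R) : R := ln x / ln 2.

Definition entropy (n : nat) (v : nat -> R) : R :=
  rsum n (fun k => if Rlt_dec 0 (v k) then - (v k * log2 (v k)) else 0).

(* Vectors are 0-indexed: p k stands for p_{k+1}; p (n-1) is p_n. *)
Definition z_index (rho : R) (n : nat) (p : nat -> R) : Z :=
  Int_part ((1 - INR n * p (n - 1)%nat) / (p (n - 1)%nat * (rho - 1))).

Definition z_rho (rho : R) (n : nat) (p : nat -> R) (k : nat) : R :=
  let pn := p (n - 1)%nat in
  let i := z_index rho n p in
  if Z.ltb (Z.of_nat k) i then rho * pn
  else if Z.eqb (Z.of_nat k) i then 1 - (INR n + IZR i * rho - IZR i - 1) * pn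
  else pn.

(* Main.v *)
Require Import Defs.
From Stdlib Require Import Reals.
Open Scope R_scope.

Lemma ln_le_sub1 (x : R) : 0 < x -> ln x <= x - 1.
Proof.
  intro Hx.
  assert (H := exp_ineq1_le (x - 1)).
  destruct (Rle_lt_or_eq_dec _ _ H) as [Hl|He].
  - rewrite <- (ln_exp (x-1)). left. apply ln_increasing; lra.
  - rewrite <- (ln_exp (x-1)). rewrite <- He. replace (1 + (x-1)) with x by ring. lra.
Qed.

Lemma rsum_S n f : rsum (S n) f = rsum n f + f n.
Proof.
  unfold rsum. rewrite seq_S, map_app, fold_right_app. simpl.
  generalize (f n). induction (map f (seq 0 n)) as [|a l IH]; intro r; simpl.
  - ring.
  - rewrite IH. ring.
Qed.

Lemma rsum_0 f : rsum 0 f = 0.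
Proof. reflexivity. Qed.

Lemma rsum_le n f g : (forall k, (k < n)%nat -> f k <= g k) -> rsum n f <= rsum n g.
Proof.
  induction n; intro H. rewrite !rsum_0; lra.
  rewrite !rsum_S. assert (f n <= g n) by (apply H; lia).
  assert (rsum n f <= rsum n g) by (apply IHn; intros; apply H; lia). lra.
Qed.

Lemma rsum_ext n f g : (forall k, (k < n)%nat -> f k = g k) -> rsum n f = rsum n g.
Proof.
  intro H; apply Rle_antisym; apply rsum_le; intros k Hk; rewrite (H k Hk); lra.
Qed.

Lemma rsum_lin n f a b : rsum n (fun k => a * f k + b) = a * rsum n f + b * INR n.
Proof.
  induction n. rewrite !rsum_0; simpl; ring.
  rewrite !rsum_S, IHn, S_INR. ring.
Qed.

Lemma rsum_lower n p : (forall k, (S k < n)%nat -> p (S k) <= p k) ->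
  forall k, (k < n)%nat -> p (n-1)%nat <= p k.
Proof.
  intros H k Hk.
  assert (forall d, (k + d < n)%nat -> p (k + d)%nat <= p k).
  { induction d; intro Hd. rewrite Nat.add_0_r; lra.
    replace (k + S d)%nat with (S (k + d)) by lia.
    assert (p (S (k+d)) <= p (k+d)%nat) by (apply H; lia).
    assert (p (k+d)%nat <= p k) by (apply IHd; lia). lra. }
  replace (n-1)%nat with (k + (n-1-k))%nat by lia. apply H0. lia.
Qed.

Lemma rsum_upper n p : (forall k, (S k < n)%nat -> p (S k) <= p k) ->
  forall k, (k < n)%nat -> p k <= p 0%nat.
Proof.
  intros H k. induction k; intro Hk. lra.
  assert (p (S k) <= p k) by (apply H; lia). assert (p k <= p 0%nat) by (apply IHk; lia). lra.
Qed.

Lemma rsum_pw (a b c : R) (j N : nat) (f : nat -> R) :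
  (forall k, (k < N)%nat -> f k = if Nat.ltb k j then a else if Nat.eqb k j then b else c) ->
  (j < N)%nat -> rsum N f = INR j * a + b + INR (N - j - 1) * c.
Proof.
  intros Hf HjN.
  assert (A : forall m, (m <= j)%nat -> rsum m f = INR m * a).
  { induction m; intro Hm. rewrite rsum_0; simpl; ring.
    rewrite rsum_S, IHm by lia. rewrite Hf by lia.
    replace (Nat.ltb m j) with true by (symmetry; apply Nat.ltb_lt; lia).
    rewrite S_INR; ring. }
  assert (B : forall d, (j + 1 + d <= N)%nat -> rsum (j + 1 + d) f = INR j * a + b + INR d * c).
  { induction d; intro Hd.
    - replace (j+1+0)%nat with (S j) by lia. rewrite rsum_S, A by lia. rewrite Hf by lia.
      replace (Nat.ltb j j) with false by (symmetry; apply Nat.ltb_ge; lia).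
      rewrite Nat.eqb_refl. simpl; ring.
    - replace (j+1+S d)%nat with (S (j+1+d)) by lia. rewrite rsum_S, IHd by lia.
      rewrite Hf by lia.
      replace (Nat.ltb (j+1+d) j) with false by (symmetry; apply Nat.ltb_ge; lia).
      replace (Nat.eqb (j+1+d) j) with false by (symmetry; apply Nat.eqb_neq; lia).
      rewrite S_INR; ring. }
  replace N with (j + 1 + (N - j - 1))%nat at 1 by lia. apply B. lia.
Qed.

Lemma term_ineq (rho q z : R) : 1 < rho -> 0 < q -> q <= z -> z <= rho * q ->
  z * ln z <= z * ln q + (z - q) * (rho * ln rho / (rho - 1)).
Proof.
  intros Hr Hq H1 H2.
  set (y := z / q).
  assert (Hz : z = q * y) by (unfold y; field; lra).
  assert (Hy1 : 1 <= y) by (unfold y; apply Rmult_le_reg_r with q; [lra|]; field_simplify; lra).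
  assert (Hy2 : y <= rho) by (unfold y; apply Rmult_le_reg_r with q; [lra|]; field_simplify; lra).
  assert (A : ln y <= y - 1) by (apply ln_le_sub1; lra).
  assert (B : ln (y / rho) <= y / rho - 1) by (apply ln_le_sub1; apply Rdiv_lt_0_compat; lra).
  unfold Rdiv in B. rewrite ln_mult, ln_Rinv in B by (try apply Rinv_0_lt_compat; lra).
  assert (B' : rho * ln y <= rho * ln rho + y - rho).
  { assert (rho * (ln y + - ln rho) <= rho * (y * / rho - 1)) by (apply Rmult_le_compat_l; lra).
    replace (rho * (y * / rho - 1)) with (y - rho) in H by (field; lra). lra. }
  assert (C : (rho - y) * ln y <= (rho - y) * (y - 1)) by (apply Rmult_le_compat_l; lra).
  assert (D : (y - 1) * (rho * ln y) <= (y - 1) * (rho * ln rho + y - rho)) by (apply Rmult_le_compat_l; lra).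
  assert (E : y * ln y <= (y - 1) * (rho * ln rho / (rho - 1))).
  { apply Rmult_le_reg_r with (rho - 1). lra.
    replace ((y - 1) * (rho * ln rho / (rho - 1)) * (rho - 1)) with ((y-1) * (rho * ln rho)) by (field; lra).
    nra. }
  rewrite Hz. rewrite ln_mult by lra.
  assert (q * (y * ln y) <= q * ((y - 1) * (rho * ln rho / (rho - 1)))) by (apply Rmult_le_compat_l; lra).
  nra.
Qed.

Theorem lemma7 (rho : R) (n : nat) (p : nat -> R)
  (Hrho : 1 < rho)
  (Hn : (1 <= n)%nat)
  (Hsum : rsum n p = 1)
  (Hmono : forall k : nat, (S k < n)%nat -> p (S k) <= p k)
  (Hpos : 0 < p (n - 1)%nat)
  (Hratio : p 0%nat / p (n - 1)%nat <= rho) :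
  log2 (INR n) - entropy n (z_rho rho n p)
  <= (rho * ln rho / (rho - 1) - 1 - ln (rho * ln rho / (rho - 1))) * / ln 2.
Proof.
  set (q := p (n-1)%nat) in *.
  set (t := rho * ln rho / (rho - 1)).
  assert (Hlnr : 0 < ln rho) by (rewrite <- ln_1; apply ln_increasing; lra).
  assert (Ht : 0 < t) by (unfold t; apply Rdiv_lt_0_compat; [apply Rmult_lt_0_compat|]; lra).
  assert (Hln2 : 0 < ln 2) by (rewrite <- ln_1; apply ln_increasing; lra).
  assert (Hnpos : 1 <= INR n) by (apply (le_INR 1); lia).
  assert (Hp0 : p 0%nat <= rho * q).
  { apply Rmult_le_reg_r with (/ q). apply Rinv_0_lt_compat; lra.
    replace (rho * q * / q) with rho by (field; lra). exact Hratio. }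
  assert (Hnq : INR n * q <= 1).
  { rewrite <- Hsum.
    assert (rsum n (fun k => 0 * p k + q) <= rsum n p).
    { apply rsum_le. intros k Hk. assert (q <= p k) by (apply (rsum_lower n p Hmono); lia). lra. }
    rewrite rsum_lin in H. lra. }
  assert (Hup : 1 <= q + (INR n - 1) * rho * q).
  { assert (Hsp : rsum n p = rsum (n-1) p + q).
    { unfold q. replace n with (S (n-1)) at 1 by lia. rewrite rsum_S. reflexivity. }
    assert (rsum (n-1) p <= rsum (n-1) (fun k => 0 * p k + rho * q)).
    { apply rsum_le. intros k Hk. assert (p k <= p 0%nat) by (apply (rsum_upper n p Hmono); lia). lra. }
    rewrite rsum_lin, minus_INR in H by lia. simpl in H. nra. }
  set (X := (1 - INR n * q) / (q * (rho - 1))).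
  assert (HXe : X * (q * (rho - 1)) = 1 - INR n * q) by (unfold X; field; lra).
  assert (HqR : 0 < q * (rho - 1)) by (apply Rmult_lt_0_compat; lra).
  assert (HX0 : 0 <= X) by (apply Rmult_le_reg_r with (q * (rho - 1)); [exact HqR|]; rewrite HXe; lra).
  assert (HX1 : X <= INR n - 1) by (apply Rmult_le_reg_r with (q * (rho - 1)); [exact HqR|]; rewrite HXe; nra).
  destruct (base_Int_part X) as [Hi1 Hi2].
  unfold z_rho, z_index. fold q. fold X.
  set (i := Int_part X) in *.
  assert (Hi0 : (0 <= i)%Z).
  { assert (-1 < IZR i) by lra. apply lt_IZR in H. lia. }
  set (j := Z.to_nat i).
  assert (Hij : i = Z.of_nat j) by (unfold j; rewrite Z2Nat.id; lia).
  assert (HIj : IZR i = INR j) by (rewrite Hij, INR_IZR_INZ; reflexivity).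
  assert (Hjn : (j < n)%nat).
  { apply INR_lt. lra. }
  set (b := 1 - (INR n + IZR i * rho - IZR i - 1) * q).
  assert (Hb1 : q <= b) by (unfold b; nra).
  assert (Hb2 : b <= rho * q) by (unfold b; nra).
  set (z := fun k : nat => if (Z.of_nat k <? i)%Z then rho * q
            else if (Z.of_nat k =? i)%Z then b else q).
  change (log2 (INR n) - entropy n z <= (t - 1 - ln t) * / ln 2).
  assert (Hzf : forall k, (k < n)%nat -> z k = if Nat.ltb k j then rho * q else if Nat.eqb k j then b else q).
  { intros k Hk. unfold z. rewrite Hij.
    destruct (Z.ltb_spec (Z.of_nat k) (Z.of_nat j)); destruct (Nat.ltb_spec k j); try lia;
    destruct (Z.eqb_spec (Z.of_nat k) (Z.of_nat j)); destruct (Nat.eqb_spec k j); try lia; reflexivity. }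
  assert (Hzb : forall k, (k < n)%nat -> q <= z k /\ z k <= rho * q).
  { intros k Hk. rewrite Hzf by exact Hk.
    destruct (Nat.ltb k j); [|destruct (Nat.eqb k j)]; nra. }
  assert (Hzs : rsum n z = 1).
  { rewrite (rsum_pw (rho*q) b q j n z Hzf Hjn). unfold b. rewrite HIj.
    rewrite !minus_INR by lia. simpl. ring. }
  assert (Hent : entropy n z = rsum n (fun k => (- / ln 2) * (z k * ln (z k)) + 0)).
  { unfold entropy. apply rsum_ext. intros k Hk.
    destruct (Hzb k Hk). destruct (Rlt_dec 0 (z k)); [|lra].
    unfold log2. field. lra. }
  rewrite Hent, rsum_lin.
  assert (HS : rsum n (fun k => z k * ln (z k)) <= rsum n (fun k => (ln q + t) * z k + (- q * t))).
  { apply rsum_le. intros k Hk. destruct (Hzb k Hk).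
    pose proof (term_ineq rho q (z k) Hrho Hpos H H0). fold t in H1. lra. }
  rewrite rsum_lin, Hzs in HS.
  assert (Hmain : ln (INR n) + rsum n (fun k => z k * ln (z k)) <= t - 1 - ln t).
  { assert (L := ln_le_sub1 (INR n * q * t)).
    assert (0 < INR n * q * t) by (apply Rmult_lt_0_compat; [apply Rmult_lt_0_compat|]; lra).
    specialize (L H). assert (0 < INR n * q) by (apply Rmult_lt_0_compat; lra).
    rewrite (ln_mult (INR n * q) t), (ln_mult (INR n) q) in L by lra.
    assert (E : - q * t * INR n = - (INR n * q * t)) by ring. rewrite E in HS.
    lra. }
  unfold log2.
  set (S := rsum n (fun k => z k * ln (z k))) in *.
  replace (ln (INR n) / ln 2 - (- / ln 2 * S + 0 * INR n)) with ((ln (INR n) + S) * / ln 2) by (field; lra).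
  apply Rmult_le_compat_r. left; apply Rinv_0_lt_compat; lra. exact Hmain.
Qed.
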